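(* Let $\varphi=\frac{1+\sqrt5}{2}$ and $\theta_0=(\theta_1,\theta_2,\theta_3)=\left(\frac12,\frac1\varphi,\frac1{\varphi^2}\right)$. Let $m=(0,y,z)$ be a point of the face $X=0$ of the unit cube with well defined orbit, identified with $(y,z)\in\mathbb T^2=(\mathbb R/\mathbb Z)^2$. Then for every $k\ge 0$, the $(k+1)$-th return word of $a$ in the billiard word $u=f_{\theta_0}(m)$ is $\Phi\big(m+2k\theta_2(1,-1)\bmod 1\big)$.
   Context: $f_{\theta_0}(m)\in\{a,b,c\}^{\mathbb N}$ records, in order, the successive intersections of the half line $m+\mathbb R_+\theta_0$ with the planes $X=n$ (letter $a$), $Y=n$ (letter $b$), $Z=n$ (letter $c$), $n\in\mathbb Z$; for $m$ on the face $X=0$ it begins with $a$. The $j$-th return word of $a$ in $u$ is the factor of $u$ starting at the $j$-th occurrence of $a$ and ending just before the $(j+1)$-th occurrence of $a$. The face $X=0$ (identified with $\mathbb T^2$ via $(y,z)$) is partitioned, up to boundaries, into seven sets, for $(y,z)\in[0,1)^2$: $P_{a_7}$: $y<4-2\varphi,\ z<2\varphi-3$; $P_{a_4}$: $y>4-2\varphi,\ z<2\varphi-3$; $P_{a_2}$: $y<4-2\varphi,\ 2\varphi-3<z<(2-\varphi)+y/\varphi$; $P_{a_1}$: $y<4-2\varphi,\ z>(2-\varphi)+y/\varphi$; $P_{a_5}$: $y>4-2\varphi,\ 2\varphi-3<z<(3-2\varphi)+y/\varphi$; $P_{a_3}$: $y>4-2\varphi,\ (3-2\varphi)+y/\varphi<z<(2-\varphi)+y/\varphi$;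 $P_{a_6}$: $y>4-2\varphi,\ z>(2-\varphi)+y/\varphi$. For a point $q$ of the face, $\Phi(q):=\Phi(a_i)$ where $q\in P_{a_i}$, with $\Phi(a_1)=acb$, $\Phi(a_2)=abc$, $\Phi(a_3)=abcb$, $\Phi(a_4)=abb$, $\Phi(a_5)=abbc$, $\Phi(a_6)=acbb$, $\Phi(a_7)=ab$ (this is the first return word of $a$ in $f_{\theta_0}(q)$). *)

(* Defs.v *)
From Stdlib Require Import Reals Lra List.
Open Scope R_scope.

Definition phi : R := (1 + sqrt 5) / 2.
Definition theta1 : R := 1 / 2.
Definition theta2 : R := 1 / phi.
Definition theta3 : R := 1 / (phi ^ 2).

Inductive letter : Set := la | lb | lc.

(* [hit y z t l]: the half line m + R_+ theta0, m = (0,y,z), meets at time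
   t >= 0 a plane X = n (l = la), Y = n (l = lb) or Z = n (l = lc), n in Z. *)
Definition hit (y z t : R) (l : letter) : Prop :=
  0 <= t /\ exists n : Z,
    match l with
    | la => 0 + t * theta1 = IZR n
    | lb => y + t * theta2 = IZR n
    | lc => z + t * theta3 = IZR n
    end.

(* well defined orbit: the half line never meets two planes of different
   directions at the same time (i.e. never passes through an edge). *)
Definition well_defined_orbit (y z : R) : Prop :=
  forall t l1 l2, hit y z t l1 -> hit y z t l2 -> l1 = l2.

Definition billiard_word (y z : R) (u : nat -> letter) : Prop :=
  exists tau : nat -> R,
    (forall n, tau n < tau (S n)) /\
    (forall n, hit y z (tau n) (u n)) /\
    (forall t l, hit y z t l -> exists n, tau n = t /\ u n = l).

Definition is_a (l : letter) : bool := match l with la => true | _ => false end.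

Definition count_a (u : nat -> letter) (p : nat) : nat :=
  length (filter (fun i => is_a (u i)) (seq 0 p)).

(* position p is the (j+1)-th occurrence of a in u *)
Definition occ_a (u : nat -> letter) (p j : nat) : Prop :=
  u p = la /\ count_a u p = j.

(* w is the j-th return word of a in u (j >= 1): the factor of u starting at
   the j-th occurrence of a and ending just before the (j+1)-th one. *)
Definition return_word (u : nat -> letter) (j : nat) (w : list letter) : Prop :=
  exists p q, occ_a u p (j - 1)%nat /\ occ_a u q j /\
              w = map u (seq p (q - p)).

(* Phi on the face X = 0, points (y,z) in [0,1)^2; the seven pieces P_{a_i}
   are open (boundaries excluded). [Phi_rel y z w] means (y,z) lies in some
   P_{a_i} and w = Phi(a_i). *)
Definition Phi_rel (y z : R) (w : list letter) : Prop :=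
  0 <= y < 1 /\ 0 <= z < 1 /\
  ( (y < 4 - 2*phi /\ z > (2 - phi) + y / phi /\ w = la :: lc :: lb :: nil)
 \/ (y < 4 - 2*phi /\ 2*phi - 3 < z /\ z < (2 - phi) + y / phi
               /\ w = la :: lb :: lc :: nil)
 \/ (y > 4 - 2*phi /\ (3 - 2*phi) + y / phi < z /\ z < (2 - phi) + y / phi
               /\ w = la :: lb :: lc :: lb :: nil)
 \/ (y > 4 - 2*phi /\ z < 2*phi - 3 /\ w = la :: lb :: lb :: nil)
 \/ (y > 4 - 2*phi /\ 2*phi - 3 < z /\ z < (3 - 2*phi) + y / phi
               /\ w = la :: lb :: lb :: lc :: nil)
 \/ (y > 4 - 2*phi /\ z > (2 - phi) + y / phi /\ w = la :: lc :: lb :: lb :: nil)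
 \/ (y < 4 - 2*phi /\ z < 2*phi - 3 /\ w = la :: lb :: nil) ).

(* Main.v *)
Require Import Defs.
From Stdlib Require Import Reals Lra Lia List ZArith.
Open Scope R_scope.

Lemma phi_sq : phi * phi = phi + 1.
Proof. unfold phi. assert (H := sqrt_sqrt 5 ltac:(lra)). nra. Qed.

Lemma phi_bnd : 1.61 < phi < 1.62.
Proof. unfold phi. assert (H := sqrt_sqrt 5 ltac:(lra)). assert (H0 := sqrt_pos 5). split; nra. Qed.

Lemma theta2_eq : theta2 = phi - 1.
Proof. unfold theta2. assert (H := phi_sq). assert (H1:=phi_bnd). field_simplify; [|lra]. 
 apply (Rmult_eq_reg_r phi); [|lra]. field_simplify; [|lra]. nra. Qed.

Lemma theta3_eq : theta3 = 2 - phi.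
Proof. unfold theta3. assert (H := phi_sq). assert (H1:=phi_bnd). simpl. rewrite Rmult_1_r, H.
 field_simplify; [|lra]. apply (Rmult_eq_reg_r (phi+1)); [|lra]. field_simplify; [|lra]. nra. Qed.

Lemma div_phi x : x / phi = x * (phi - 1).
Proof. pose proof phi_bnd. pose proof phi_sq. unfold Rdiv. 
 replace (/ phi) with (phi - 1). reflexivity.
 apply (Rmult_eq_reg_l phi); [|lra]. rewrite Rinv_r by lra. lra. Qed.
Definition lhit (y z s : R) (l : letter) : Prop := exists n : Z,
  match l with la => s / 2 = IZR n | lb => y + s*(phi-1) = IZR n | lc => z + s*(2-phi) = IZR n end.

Lemma hshift (y z : R) (k : nat) (t : R) (l : letter) :
  hit y z t l <-> 0 <= t /\ lhit (frac_part (y + 2*INR k*theta2)) (frac_part (z - 2*INR k*theta2)) (t - 2*INR k) l.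
Proof.
  assert (HY := Rplus_Int_part_frac_part (y + 2*INR k*theta2)).
  assert (HZ := Rplus_Int_part_frac_part (z - 2*INR k*theta2)).
  set (y' := frac_part (y + 2*INR k*theta2)) in *.
  set (z' := frac_part (z - 2*INR k*theta2)) in *.
  set (I := Int_part (y + 2*INR k*theta2)) in *.
  set (J := Int_part (z - 2*INR k*theta2)) in *.
  clearbody y' z' I J. rewrite INR_IZR_INZ in *. set (K := Z.of_nat k) in *. clearbody K.
  rewrite theta2_eq in HY, HZ. unfold hit, lhit, theta1. rewrite theta2_eq, theta3_eq.
  unfold hit, lhit; split; intros [Ht [n Hn]]; split; auto; destruct l.
  - exists (n - K)%Z. rewrite minus_IZR. lra.
  - exists (n - I)%Z. rewrite minus_IZR. lra.
  - exists (n - J - 2*K)%Z. rewrite !minus_IZR, mult_IZR. simpl (IZR 2). lra.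
  - exists (n + K)%Z. rewrite plus_IZR. lra.
  - exists (n + I)%Z. rewrite plus_IZR. lra.
  - exists (n + J + 2*K)%Z. rewrite !plus_IZR, mult_IZR. simpl (IZR 2). lra.
Qed.
Lemma IZR_small (n : Z) (a : Z) : IZR a - 1 < IZR n < IZR a + 1 -> n = a.
Proof. intros [H1 H2].
  assert (IZR (a - 1) < IZR n) by (rewrite minus_IZR; simpl; lra).
  assert (IZR n < IZR (a + 1)) by (rewrite plus_IZR; simpl; lra).
  apply lt_IZR in H. apply lt_IZR in H0. lia. Qed.

Lemma phi_inv1 s : phi * (s * (phi - 1)) = s.
Proof. replace (phi * (s * (phi - 1))) with (s * (phi*phi - phi)) by ring. rewrite phi_sq. ring. Qed.
Lemma phi_inv2 s : (phi + 1) * (s * (2 - phi)) = s.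
Proof. replace ((phi + 1) * (s * (2 - phi))) with (s * (phi + 2 - phi*phi)) by ring. rewrite phi_sq. ring. Qed.

Lemma lchar y z s l : 0 <= y < 1 -> 0 <= z < 1 -> 0 < s <= 2 -> lhit y z s l ->
 (l = la /\ s = 2) \/ (l = lb /\ s = phi*(1-y)) \/ (l = lb /\ s = phi*(2-y)) \/ (l = lc /\ s = (phi+1)*(1-z)).
Proof.
  intros Hy Hz Hs [n Hn]. pose proof phi_bnd. destruct l.
  - left. split; auto. assert (n = 1%Z) by (apply IZR_small; simpl; lra). subst. simpl in Hn. lra.
  - assert (0 < s * (phi - 1) <= 2 * (phi - 1)) by (split; nra).
    assert (n = 1%Z \/ n = 2%Z) as [-> | ->].
    { destruct (Rlt_le_dec (IZR n) 1.5).
      - left; apply IZR_small; simpl; lra.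
      - right; apply IZR_small; simpl; lra. }
    + right; left; split; auto. rewrite <- (phi_inv1 s). f_equal. simpl in Hn. lra.
    + right; right; left; split; auto. rewrite <- (phi_inv1 s). f_equal. simpl in Hn. lra.
  - assert (0 < s * (2 - phi) <= 2 * (2 - phi)) by (split; nra).
    assert (n = 1%Z) as -> by (apply IZR_small; simpl; lra).
    right; right; right; split; auto. rewrite <- (phi_inv2 s). f_equal. simpl in Hn. lra.
Qed.

Lemma lhit_a y z : lhit y z 2 la.
Proof. exists 1%Z. simpl. lra. Qed.
Lemma lhit_b1 y z : lhit y z (phi*(1-y)) lb.
Proof. exists 1%Z. simpl. replace (phi*(1-y)*(phi-1)) with ((1-y)*(phi*phi-phi)) by ring. rewrite phi_sq. ring. Qed.
Lemma lhit_b2 y z : lhit y z (phi*(2-y)) lb.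
Proof. exists 2%Z. simpl. replace (phi*(2-y)*(phi-1)) with ((2-y)*(phi*phi-phi)) by ring. rewrite phi_sq. ring. Qed.
Lemma lhit_c y z : lhit y z ((phi+1)*(1-z)) lc.
Proof. exists 1%Z. simpl. replace ((phi+1)*(1-z)*(2-phi)) with ((1-z)*(phi+2-phi*phi)) by ring. rewrite phi_sq. ring. Qed.

Definition good (y z : R) (u : nat -> letter) (tau : nat -> R) :=
  (forall n, tau n < tau (S n)) /\ (forall n, hit y z (tau n) (u n)) /\
  (forall t l, hit y z t l -> exists n, tau n = t /\ u n = l).

Lemma mono (tau : nat -> R) : (forall n, tau n < tau (S n)) -> forall n m, (n < m)%nat -> tau n < tau m.
Proof. intros H n m Hm. induction Hm. apply H. specialize (H m). lra. Qed.

Lemma mono_le (tau : nat -> R) : (forall n, tau n < tau (S n)) -> forall n m, (n <= m)%nat -> tau n <= tau m.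
Proof. intros H n m Hm. destruct (Nat.eq_dec n m). subst; lra. left; apply mono; auto; lia. Qed.

Lemma idx_lt (tau : nat -> R) : (forall n, tau n < tau (S n)) -> forall n m, tau n < tau m -> (n < m)%nat.
Proof. intros H n m Hl. destruct (Nat.lt_ge_cases n m); auto. pose proof (mono_le tau H m n H0). lra. Qed.

Lemma next_hit y z u tau n t1 t2 : good y z u tau -> tau n = t1 -> t1 < t2 ->
  (exists l, hit y z t2 l) -> (forall t l, hit y z t l -> t1 < t -> t < t2 -> False) -> tau (S n) = t2.
Proof.
  intros [Hi [Hh Hc]] E Hlt [l Hl] Hg.
  destruct (Hc _ _ Hl) as [m [Em _]].
  assert (n < m)%nat by (apply (idx_lt tau Hi); lra).
  pose proof (mono_le tau Hi (S n) m H). pose proof (Hi n).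
  destruct (Rtotal_order (tau (S n)) t2) as [L|[L|L]]; auto; try lra.
  exfalso. apply (Hg _ _ (Hh (S n))); lra.
Qed.

Lemma letter_of y z u tau n t l : well_defined_orbit y z -> good y z u tau -> tau n = t -> hit y z t l -> u n = l.
Proof. intros W [Hi [Hh Hc]] E H. subst. eapply W; eauto. Qed.

Lemma INR_nn k : 0 <= 2 * INR k.
Proof. pose proof (pos_INR k). lra. Qed.

Lemma lnext y z u tau k n s1 s2 l : good y z u tau -> tau n = 2 * INR k + s1 -> 0 <= s1 -> s1 < s2 ->
  lhit (frac_part (y + 2*INR k*theta2)) (frac_part (z - 2*INR k*theta2)) s2 l ->
  (forall s l, lhit (frac_part (y + 2*INR k*theta2)) (frac_part (z - 2*INR k*theta2)) s l -> s1 < s -> s < s2 -> False) ->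
  tau (S n) = 2 * INR k + s2.
Proof.
  intros G E H0 H12 Hh Hg. pose proof (INR_nn k).
  apply (next_hit y z u tau n (2*INR k + s1) (2*INR k + s2)); auto.
  - lra.
  - exists l. apply (hshift y z k). split. lra. replace (2 * INR k + s2 - 2 * INR k) with s2 by ring. auto.
  - intros t l' Ht L1 L2. apply (hshift y z k) in Ht. destruct Ht as [_ Ht]. eapply Hg; eauto; lra.
Qed.

Lemma lletter y z u tau k n s l : well_defined_orbit y z -> good y z u tau -> tau n = 2 * INR k + s -> 0 <= s ->
  lhit (frac_part (y + 2*INR k*theta2)) (frac_part (z - 2*INR k*theta2)) s l -> u n = l.
Proof.
  intros W G E H0 Hh. pose proof (INR_nn k). eapply letter_of; eauto.
  apply (hshift y z k). split. lra. replace (2 * INR k + s - 2 * INR k) with s by ring. auto.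
Qed.

Lemma lwd y z k s l1 l2 : well_defined_orbit y z -> 0 <= s ->
  lhit (frac_part (y + 2*INR k*theta2)) (frac_part (z - 2*INR k*theta2)) s l1 ->
  lhit (frac_part (y + 2*INR k*theta2)) (frac_part (z - 2*INR k*theta2)) s l2 -> l1 = l2.
Proof.
  intros W H0 H1 H2. pose proof (INR_nn k). apply (W (2 * INR k + s)).
  - apply (hshift y z k). split. lra. replace (2 * INR k + s - 2 * INR k) with s by ring. auto.
  - apply (hshift y z k). split. lra. replace (2 * INR k + s - 2 * INR k) with s by ring. auto.
Qed.

Ltac nogap Hy Hz :=
  let s := fresh "s" in let l := fresh "l" in let Hh := fresh "Hh" in
  let Hs1 := fresh "Hs" in let Hs2 := fresh "Hs" in let H := fresh in let Eq := fresh "Eq" in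
  intros s l Hh Hs1 Hs2; assert (H : 0 < s <= 2) by lra;
  destruct (lchar _ _ _ _ Hy Hz H Hh) as [[_ Eq]|[[_ Eq]|[[_ Eq]|[_ Eq]]]]; rewrite Eq in Hs1, Hs2; lra.

Ltac chain LN G E Hh := (eapply (LN _ _ _ _ G E); [lra|lra|exact Hh|]);
  match goal with Hy : 0 <= ?y < 1, Hz : 0 <= ?z < 1 |- _ => nogap Hy Hz end.

Ltac fin := repeat split; try lra; try reflexivity.
Ltac clash Hx Hy Eq := rewrite Eq in Hx; exfalso;
  match goal with LW : forall (s : R) (l1 l2 : letter), _ |- _ =>
  match goal with W : well_defined_orbit _ _ |- _ =>
  let Hd := fresh in assert (Hd := fun H0 => LW _ _ _ W H0 Hx Hy); specialize (Hd ltac:(lra)); discriminate end end.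

Lemma step y z u tau k p : well_defined_orbit y z -> good y z u tau -> tau p = 2 * INR k ->
  exists r, tau (p + S r)%nat = 2 * INR k + 2 /\ (forall i, (i < r)%nat -> u (S p + i)%nat <> la) /\
     Phi_rel (frac_part (y + 2*INR k*theta2)) (frac_part (z - 2*INR k*theta2)) (u p :: map u (seq (S p) r)).
Proof.
  intros W G E0.
  pose proof (base_fp (y + 2*INR k*theta2)) as Hy.
  pose proof (base_fp (z - 2*INR k*theta2)) as Hz.
  assert (Hlp : forall s l, lhit (frac_part (y + 2*INR k*theta2)) (frac_part (z - 2*INR k*theta2)) s l -> lhit (frac_part (y + 2*INR k*theta2)) (frac_part (z - 2*INR k*theta2)) s l) by auto.
  assert (E : tau p = 2 * INR k + 0) by lra. clear E0.
  assert (Up : u p = la).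
  { eapply lletter; eauto. lra. exists 0%Z. simpl. lra. }
  unfold Phi_rel. rewrite !div_phi.
  generalize (lhit_a (frac_part (y + 2*INR k*theta2)) (frac_part (z - 2*INR k*theta2))).
  generalize (lhit_b1 (frac_part (y + 2*INR k*theta2)) (frac_part (z - 2*INR k*theta2))).
  generalize (lhit_b2 (frac_part (y + 2*INR k*theta2)) (frac_part (z - 2*INR k*theta2))).
  generalize (lhit_c (frac_part (y + 2*INR k*theta2)) (frac_part (z - 2*INR k*theta2))).
  generalize (lnext y z u tau k). generalize (lletter y z u tau k). generalize (lwd y z k).
  clear Hlp.
  set (y' := frac_part (y + 2*INR k*theta2)) in *.
  set (z' := frac_part (z - 2*INR k*theta2)) in *. clearbody y' z'.
  intros LW LL LN Hc Hb2 Hb1 Ha.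
  assert (Hy' : 0 <= y' < 1) by lra. assert (Hz' : 0 <= z' < 1) by lra. clear Hy Hz.
  pose proof phi_bnd as PB. pose proof phi_sq as PS.
  assert (D1 : (phi+1)*(1-z') - phi*(1-y') = (phi+1)*((2-phi)+y'*(phi-1) - z')).
  { assert (phi*phi*y' = (phi+1)*y') by (rewrite PS; ring). lra. }
  assert (D2 : (phi+1)*(1-z') - phi*(2-y') = (phi+1)*((3-2*phi)+y'*(phi-1) - z')).
  { assert (phi*phi*y' = (phi+1)*y') by (rewrite PS; ring). lra. }
  assert (D3 : phi*(2-y') - 2 = phi*((4-2*phi) - y')) by lra.
  assert (D4 : (phi+1)*(1-z') - 2 = (phi+1)*((2*phi-3) - z')) by lra.
  assert (Tb1 : 0 < phi*(1-y') < 2).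
  { assert (0 <= phi * y') by (apply Rmult_le_pos; lra). split; [apply Rmult_lt_0_compat|]; lra. }
  assert (Tc : 0 < (phi+1)*(1-z')) by (apply Rmult_lt_0_compat; lra).
  assert (Tb12 : phi*(1-y') < phi*(2-y')) by lra.
  destruct (Rtotal_order y' (4-2*phi)) as [Y|[Y|Y]].
  -
    assert (Tb2 : 2 < phi*(2-y')) by nra.
    destruct (Rtotal_order z' (2*phi-3)) as [Z|[Z|Z]].
    +
      assert (Tc2 : 2 < (phi+1)*(1-z')) by nra.
      assert (E1 : tau (S p) = 2 * INR k + phi*(1-y')) by chain LN G E Hb1.
      assert (E2 : tau (S (S p)) = 2 * INR k + 2) by chain LN G E1 Ha.
      assert (U1 : u (S p) = lb) by (apply (LL _ _ _ W G E1); [lra|exact Hb1]).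
      exists 1%nat. split; [rewrite !Nat.add_succ_r, Nat.add_0_r; exact E2|]. split.
      * intros i Hi. destruct i as [|]; try lia; rewrite ?Nat.add_succ_r, ?Nat.add_0_r; congruence.
      * simpl. rewrite Up, U1. fin. do 6 right. fin.
    + assert (Eq : (phi+1)*(1-z') = 2) by (replace (2*phi-3-z') with 0 in D4 by lra; lra).
      clash Hc Ha Eq.
    + assert (Tc2 : (phi+1)*(1-z') < 2) by nra.
      destruct (Rtotal_order z' ((2-phi)+y'*(phi-1))) as [L|[L|L]].
      *
        assert (O : phi*(1-y') < (phi+1)*(1-z')) by nra.
        assert (E1 : tau (S p) = 2 * INR k + phi*(1-y')) by chain LN G E Hb1.
        assert (E2 : tau (S (S p)) = 2 * INR k + (phi+1)*(1-z')) by chain LN G E1 Hc.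
        assert (E3 : tau (S (S (S p))) = 2 * INR k + 2) by chain LN G E2 Ha.
        assert (U1 : u (S p) = lb) by (apply (LL _ _ _ W G E1); [lra|exact Hb1]).
        assert (U2 : u (S (S p)) = lc) by (apply (LL _ _ _ W G E2); [lra|exact Hc]).
        exists 2%nat. split; [rewrite !Nat.add_succ_r, Nat.add_0_r; exact E3|]. split.
        -- intros i Hi. destruct i as [|[|]]; try lia; rewrite ?Nat.add_succ_r, ?Nat.add_0_r; congruence.
        -- simpl. rewrite Up, U1, U2. fin. right. left. fin.
      * assert (Eq : (phi+1)*(1-z') = phi*(1-y')) by (replace (2-phi+y'*(phi-1)-z') with 0 in D1 by lra; lra).
        clash Hc Hb1 Eq.
      *
        assert (O : (phi+1)*(1-z') < phi*(1-y')) by nra.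
        assert (E1 : tau (S p) = 2 * INR k + (phi+1)*(1-z')) by chain LN G E Hc.
        assert (E2 : tau (S (S p)) = 2 * INR k + phi*(1-y')) by chain LN G E1 Hb1.
        assert (E3 : tau (S (S (S p))) = 2 * INR k + 2) by chain LN G E2 Ha.
        assert (U1 : u (S p) = lc) by (apply (LL _ _ _ W G E1); [lra|exact Hc]).
        assert (U2 : u (S (S p)) = lb) by (apply (LL _ _ _ W G E2); [lra|exact Hb1]).
        exists 2%nat. split; [rewrite !Nat.add_succ_r, Nat.add_0_r; exact E3|]. split.
        -- intros i Hi. destruct i as [|[|]]; try lia; rewrite ?Nat.add_succ_r, ?Nat.add_0_r; congruence.
        -- simpl. rewrite Up, U1, U2. fin. left. fin.
  - assert (Eq : phi*(2-y') = 2) by (replace (4-2*phi-y') with 0 in D3 by lra; lra).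
    clash Hb2 Ha Eq.
  -
    assert (Tb2 : phi*(2-y') < 2) by nra.
    destruct (Rtotal_order z' (2*phi-3)) as [Z|[Z|Z]].
    +
      assert (Tc2 : 2 < (phi+1)*(1-z')) by nra.
      assert (E1 : tau (S p) = 2 * INR k + phi*(1-y')) by chain LN G E Hb1.
      assert (E2 : tau (S (S p)) = 2 * INR k + phi*(2-y')) by chain LN G E1 Hb2.
      assert (E3 : tau (S (S (S p))) = 2 * INR k + 2) by chain LN G E2 Ha.
      assert (U1 : u (S p) = lb) by (apply (LL _ _ _ W G E1); [lra|exact Hb1]).
      assert (U2 : u (S (S p)) = lb) by (apply (LL _ _ _ W G E2); [lra|exact Hb2]).
      exists 2%nat. split; [rewrite !Nat.add_succ_r, Nat.add_0_r; exact E3|]. split.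
      * intros i Hi. destruct i as [|[|]]; try lia; rewrite ?Nat.add_succ_r, ?Nat.add_0_r; congruence.
      * simpl. rewrite Up, U1, U2. fin. do 3 right. left. fin.
    + assert (Eq : (phi+1)*(1-z') = 2) by (replace (2*phi-3-z') with 0 in D4 by lra; lra).
      clash Hc Ha Eq.
    + assert (Tc2 : (phi+1)*(1-z') < 2) by nra.
      destruct (Rtotal_order z' ((2-phi)+y'*(phi-1))) as [L|[L|L]].
      * assert (O : phi*(1-y') < (phi+1)*(1-z')) by nra.
        destruct (Rtotal_order z' ((3-2*phi)+y'*(phi-1))) as [M|[M|M]].
        --
          assert (O2 : phi*(2-y') < (phi+1)*(1-z')) by nra.
          assert (E1 : tau (S p) = 2 * INR k + phi*(1-y')) by chain LN G E Hb1.
          assert (E2 : tau (S (S p)) = 2 * INR k + phi*(2-y')) by chain LN G E1 Hb2.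
          assert (E3 : tau (S (S (S p))) = 2 * INR k + (phi+1)*(1-z')) by chain LN G E2 Hc.
          assert (E4 : tau (S (S (S (S p)))) = 2 * INR k + 2) by chain LN G E3 Ha.
          assert (U1 : u (S p) = lb) by (apply (LL _ _ _ W G E1); [lra|exact Hb1]).
          assert (U2 : u (S (S p)) = lb) by (apply (LL _ _ _ W G E2); [lra|exact Hb2]).
          assert (U3 : u (S (S (S p))) = lc) by (apply (LL _ _ _ W G E3); [lra|exact Hc]).
          exists 3%nat. split; [rewrite !Nat.add_succ_r, Nat.add_0_r; exact E4|]. split.
          ++ intros i Hi. destruct i as [|[|[|]]]; try lia; rewrite ?Nat.add_succ_r, ?Nat.add_0_r; congruence.
          ++ simpl. rewrite Up, U1, U2, U3. fin. do 4 right. left. fin.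
        -- assert (Eq : (phi+1)*(1-z') = phi*(2-y')) by (replace (3-2*phi+y'*(phi-1)-z') with 0 in D2 by lra; lra).
           clash Hc Hb2 Eq.
        --
          assert (O2 : (phi+1)*(1-z') < phi*(2-y')) by nra.
          assert (E1 : tau (S p) = 2 * INR k + phi*(1-y')) by chain LN G E Hb1.
          assert (E2 : tau (S (S p)) = 2 * INR k + (phi+1)*(1-z')) by chain LN G E1 Hc.
          assert (E3 : tau (S (S (S p))) = 2 * INR k + phi*(2-y')) by chain LN G E2 Hb2.
          assert (E4 : tau (S (S (S (S p)))) = 2 * INR k + 2) by chain LN G E3 Ha.
          assert (U1 : u (S p) = lb) by (apply (LL _ _ _ W G E1); [lra|exact Hb1]).
          assert (U2 : u (S (S p)) = lc) by (apply (LL _ _ _ W G E2); [lra|exact Hc]).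
          assert (U3 : u (S (S (S p))) = lb) by (apply (LL _ _ _ W G E3); [lra|exact Hb2]).
          exists 3%nat. split; [rewrite !Nat.add_succ_r, Nat.add_0_r; exact E4|]. split.
          ++ intros i Hi. destruct i as [|[|[|]]]; try lia; rewrite ?Nat.add_succ_r, ?Nat.add_0_r; congruence.
          ++ simpl. rewrite Up, U1, U2, U3. fin. do 2 right. left. fin.
      * assert (Eq : (phi+1)*(1-z') = phi*(1-y')) by (replace (2-phi+y'*(phi-1)-z') with 0 in D1 by lra; lra).
        clash Hc Hb1 Eq.
      *
        assert (O : (phi+1)*(1-z') < phi*(1-y')) by nra.
        assert (E1 : tau (S p) = 2 * INR k + (phi+1)*(1-z')) by chain LN G E Hc.
        assert (E2 : tau (S (S p)) = 2 * INR k + phi*(1-y')) by chain LN G E1 Hb1.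
        assert (E3 : tau (S (S (S p))) = 2 * INR k + phi*(2-y')) by chain LN G E2 Hb2.
        assert (E4 : tau (S (S (S (S p)))) = 2 * INR k + 2) by chain LN G E3 Ha.
        assert (U1 : u (S p) = lc) by (apply (LL _ _ _ W G E1); [lra|exact Hc]).
        assert (U2 : u (S (S p)) = lb) by (apply (LL _ _ _ W G E2); [lra|exact Hb1]).
        assert (U3 : u (S (S (S p))) = lb) by (apply (LL _ _ _ W G E3); [lra|exact Hb2]).
        exists 3%nat. split; [rewrite !Nat.add_succ_r, Nat.add_0_r; exact E4|]. split.
        -- intros i Hi. destruct i as [|[|[|]]]; try lia; rewrite ?Nat.add_succ_r, ?Nat.add_0_r; congruence.
        -- simpl. rewrite Up, U1, U2, U3. fin. do 5 right. left. fin.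
Qed.

Lemma filter_nil (u : nat -> letter) r : forall q, (forall i, (i < r)%nat -> u (q + i)%nat <> la) ->
  filter (fun i => is_a (u i)) (seq q r) = nil.
Proof.
  induction r; intros q H; simpl; auto.
  assert (is_a (u q) = false).
  { specialize (H 0%nat ltac:(lia)). rewrite Nat.add_0_r in H. destruct (u q); simpl; congruence. }
  rewrite H0. apply IHr. intros i Hi. replace (S q + i)%nat with (q + S i)%nat by lia. apply H. lia.
Qed.

Lemma count_step (u : nat -> letter) p r : u p = la -> (forall i, (i < r)%nat -> u (S p + i)%nat <> la) ->
  count_a u (p + S r) = S (count_a u p).
Proof.
  intros Up H. unfold count_a. rewrite seq_app, filter_app, length_app. simpl.
  rewrite Up. simpl. rewrite (filter_nil u r (S p)); auto. simpl. lia.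
Qed.

Lemma u_at y z u tau k p : well_defined_orbit y z -> good y z u tau -> tau p = 2 * INR k -> u p = la.
Proof.
  intros W G E. eapply letter_of; eauto. split. apply INR_nn.
  exists (Z.of_nat k). rewrite <- INR_IZR_INZ. unfold theta1. lra.
Qed.

Lemma reach y z u tau : well_defined_orbit y z -> good y z u tau ->
  forall k, exists p, tau p = 2 * INR k /\ count_a u p = k.
Proof.
  intros W G. induction k.
  - exists 0%nat. split; [|reflexivity]. simpl.
    destruct G as [Hi [Hh Hc]].
    assert (H0 : hit y z 0 la) by (split; [lra|exists 0%Z; simpl; lra]).
    destruct (Hc _ _ H0) as [m [Em _]].
    pose proof (mono_le tau Hi 0 m ltac:(lia)). destruct (Hh 0%nat) as [Hp _]. lra.
  - destruct IHk as [p [Ep Cp]].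
    destruct (step y z u tau k p W G Ep) as [r [Er [Hr _]]].
    exists (p + S r)%nat. split.
    + rewrite S_INR. lra.
    + rewrite count_step; auto. eapply u_at; eauto.
Qed.

Theorem lemma5 (y z : R) (hy : 0 <= y < 1) (hz : 0 <= z < 1)
  (hwd : well_defined_orbit y z) (u : nat -> letter) (hu : billiard_word y z u) :
  forall k : nat,
    exists w : list letter,
      return_word u (S k) w /\
      Phi_rel (frac_part (y + 2 * INR k * theta2))
              (frac_part (z - 2 * INR k * theta2)) w.
Proof.
  intros k. destruct hu as [tau HG].
  assert (G : good y z u tau) by exact HG.
  destruct (reach y z u tau hwd G k) as [p [Ep Cp]].
  destruct (step y z u tau k p hwd G Ep) as [r [Er [Hr HP]]].
  exists (u p :: map u (seq (S p) r)). split; auto.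
  exists p, (p + S r)%nat. split; [split|split; [split|]].
  - eapply u_at; eauto.
  - simpl. rewrite Nat.sub_0_r. exact Cp.
  - eapply (u_at y z u tau (S k)); eauto. rewrite S_INR. lra.
  - rewrite count_step; auto. eapply u_at; eauto.
  - replace (p + S r - p)%nat with (S r) by lia. reflexivity.
Qed.
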